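(* Let $I$ be a BI instance with matroid intersection constraint $(\mathcal I_1,\mathcal I_2)$, $0<\varepsilon<\tfrac12$, $\tfrac{\mathrm{OPT}(I)}{2}\le\alpha\le\mathrm{OPT}(I)$, and $r\in[\log_{1-\varepsilon}(\varepsilon/2)+1]$. Let $U\subseteq\mathcal K_r(\alpha)$, $\Delta\in\mathcal M_{\le q(\varepsilon)}$, and let $B$ be a minimum basis of $[(E,\mathcal I_2)\cap U]_{\le q(\varepsilon)}$ with respect to $c$. Let $a\in(U\cap\Delta)\setminus B$. Then there is $b\in B\setminus\Delta$ such that $b$ is a shift to $a$ for $\Delta$ or $b$ is a semi-shift to $a$ for $\Delta$.
   Context: A BI instance is $I=(E,\mathcal C,c,p,\beta)$ where $\mathcal C=(\mathcal I_1,\mathcal I_2)$ with $(E,\mathcal I_1),(E,\mathcal I_2)$ matroids, $c,p:E\to\mathbb R_{\ge0}$, $\beta\ge0$; $\mathcal M=\mathcal I_1\cap\mathcal I_2$; a solution is $S\in\mathcal M$ with $c(S)\le\beta$, and $\mathrm{OPT}(I)$ is the maximum of $p(S)=\sum_{e\in S}p(e)$ over solutions. $q(\varepsilon)=\lceil\varepsilon^{-1/\varepsilon}\rceil$; $\mathcal M_{\le q(\varepsilon)}=\{A\in\mathcal M:|A|\le q(\varepsilon)\}$; $[k]=\{1,\dots,\lfloor k\rfloor\}$; $A+e=A\cup\{e\}$, $A-e=A\setminus\{e\}$. Profit class: $\mathcal K_r(\alpha)=\{e\in E: \tfrac{p(e)}{2\alpha}\in((1-\varepsilon)^r,(1-\varepsilon)^{r-1}]\}$.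 $[(E,\mathcal I_2)\cap U]_{\le q}$ is the matroid with ground set $U$ and independent sets $\{A\in\mathcal I_2: A\subseteq U, |A|\le q\}$; a minimum basis w.r.t. $c$ is a basis of minimum total cost. For $\Delta\in\mathcal M_{\le q(\varepsilon)}$, $a\in\Delta\cap\mathcal K_r(\alpha)$ and $b\in\mathcal K_r(\alpha)\setminus\Delta$: $b$ is a shift to $a$ for $\Delta$ if $c(b)\le c(a)$ and $\Delta-a+b\in\mathcal M_{\le q(\varepsilon)}$; $b$ is a semi-shift to $a$ for $\Delta$ if $c(b)\le c(a)$, $\Delta-a+b\in\mathcal I_2$ and $\Delta-a+b\notin\mathcal I_1$. *)

(* Defs.v *)
From HB Require Import structures.
From mathcomp Require Import all_boot all_order all_algebra.
From mathcomp Require Import all_classical all_reals all_analysis.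
Set Implicit Arguments. Unset Strict Implicit. Unset Printing Implicit Defensive.
Import Order.TTheory GRing.Theory Num.Theory.
Local Open Scope ring_scope.

Section BI.
Variables (E : finType) (R : realType).

Definition is_matroid (I : pred {set E}) : Prop :=
  [/\ I (finset.set0 : {set E}),
      (forall A B : {set E}, B \subset A -> I A -> I B) &
      (forall A B : {set E}, I A -> I B -> (#|A| < #|B|)%N ->
          exists2 e, e \in B :\: A & I (e |: A))].

Definition wsum (w : E -> R) (S : {set E}) : R := \sum_(e in S) w e.

Definition is_solution (I1 I2 : pred {set E}) (c : E -> R) (beta : R)
  (S : {set E}) : bool := [&& I1 S, I2 S & wsum c S <= beta].

(* OPT(I) = max of p(S) over solutions S (empty set is always a solution
   when beta >= 0 and c >= 0; profits are >= 0) *)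
Definition OPT (I1 I2 : pred {set E}) (c p : E -> R) (beta : R) : R :=
  \big[Num.max/0]_(S : {set E} | is_solution I1 I2 c beta S) wsum p S.

Definition q_eps (eps : R) : nat := `|Num.ceil (eps `^ (- eps^-1))|%N.

Definition Mle (I1 I2 : pred {set E}) (q : nat) (A : {set E}) : bool :=
  [&& I1 A, I2 A & (#|A| <= q)%N].

Definition Kclass (p : E -> R) (eps alpha : R) (r : nat) : {set E} :=
  [set e | ((1 - eps) ^+ r < p e / (2 * alpha)) &&
           (p e / (2 * alpha) <= (1 - eps) ^+ r.-1)].

Definition restr_trunc (I2 : pred {set E}) (U : {set E}) (q : nat)
  (A : {set E}) : bool := [&& I2 A, A \subset U & (#|A| <= q)%N].

Definition is_basis (J : pred {set E}) (B : {set E}) : Prop :=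
  J B /\ (forall X : {set E}, J X -> B \subset X -> X = B).

Definition is_min_basis (J : pred {set E}) (c : E -> R) (B : {set E}) : Prop :=
  is_basis J B /\ (forall B' : {set E}, is_basis J B' -> wsum c B <= wsum c B').

Definition is_shift (I1 I2 : pred {set E}) (c p : E -> R) (eps alpha : R)
  (r : nat) (Delta : {set E}) (a b : E) : Prop :=
  [/\ Mle I1 I2 (q_eps eps) Delta, a \in Delta :&: Kclass p eps alpha r,
      b \in Kclass p eps alpha r :\: Delta, c b <= c a &
      Mle I1 I2 (q_eps eps) (b |: (Delta :\ a))].

Definition is_semi_shift (I1 I2 : pred {set E}) (c p : E -> R) (eps alpha : R)
  (r : nat) (Delta : {set E}) (a b : E) : Prop :=
  [/\ Mle I1 I2 (q_eps eps) Delta, a \in Delta :&: Kclass p eps alpha r,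
      b \in Kclass p eps alpha r :\: Delta, c b <= c a &
      (I2 (b |: (Delta :\ a)) /\ ~~ I1 (b |: (Delta :\ a)))].

End BI.

(* Main.v *)
Require Import Defs.
From HB Require Import structures.
From mathcomp Require Import all_boot all_order all_algebra.
From mathcomp Require Import all_classical all_reals all_analysis.
Import Order.TTheory GRing.Theory Num.Theory.
Local Open Scope ring_scope.
Local Notation subsetP := fintype.subsetP.
Local Notation subsetPn := fintype.subsetPn.
Local Notation subUset := finset.subUset.
Local Notation sub1set := finset.sub1set.
Local Notation eqEsubset := finset.eqEsubset.
Local Notation properEneq := finset.properEneq.
Local Notation proper_card := fintype.proper_card.
Local Notation subsetUr := finset.subsetUr.
Local Notation subsetUl := finset.subsetUl.
Local Notation setUS := finset.setUS.
Local Notation sub0set := finset.sub0set.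
Local Notation subxx := fintype.subxx.
Local Notation subset_trans := fintype.subset_trans.

Section Helpers.
Variables (E : finType) (R : realType).

Lemma max_exists (P : pred {set E}) (S0 : {set E}) : P S0 ->
  exists W, P W /\ (forall X, P X -> (#|X| <= #|W|)%N).
Proof.
move=> PS0; case: (arg_maxnP (fun W : {set E} => #|W|) PS0) => W PW HW.
by exists W; split.
Qed.

Lemma noext_bound (I : pred {set E}) (Z T : {set E}) : is_matroid I -> I Z ->
  (forall e, e \in T :\: Z -> ~~ I (e |: Z)) ->
  forall W, I W -> W \subset Z :|: T -> (#|W| <= #|Z|)%N.
Proof.
case=> _ _ Hx IZ Hn W IW sW; rewrite leqNgt; apply/negP => lt.
have [e] := Hx Z W IZ IW lt; rewrite inE => /andP [eZ eW] Ie.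
have eT : e \in T.
  by move/subsetP: sW => /(_ e eW); rewrite inE (negbTE eZ).
by move: (Hn e); rewrite inE eZ eT Ie => /(_ isT).
Qed.

Arguments noext_bound {I Z T}.
Arguments max_exists {P S0}.
Lemma exch_lemma (I : pred {set E}) (D T : {set E}) (a : E) (q : nat) :
  is_matroid I -> I D -> a \in D -> I T -> a \notin T ->
  ((q <= #|T|)%N /\ (#|D| <= q)%N \/ ~~ I (a |: T)) ->
  exists2 b, b \in T :\: D & I (b |: (D :\ a)).
Proof.
move=> Im ID aD IT aT Hc.
case: (Im) => _ Hh Hx.
set Z := D :\ a.
have IZ : I Z by apply: (Hh D) => //; apply: subD1set.
have cZ : #|D| = (#|Z|).+1 by rewrite (cardsD1 a D) aD.
apply: contrapT => Hno.
have Hn : forall e, e \in T :\: Z -> ~~ I (e |: Z).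
  move=> e; rewrite !inE negb_and negbK => /andP [/orP [/eqP -> | eD] eT].
    by rewrite eT in aT.
  apply/negP => Ie; apply: Hno; exists e => //; by rewrite inE eD eT.
have Hb := noext_bound Im IZ Hn.
case: Hc => [[qT Dq] | nIaT].
  have := Hb T IT (subsetUr _ _).
  have : (#|Z| < #|T|)%N by apply: leq_trans qT; rewrite -cZ.
  by rewrite ltnNge => /negbTE ->.
pose P := fun W : {set E} => [&& I W, T \subset W & W \subset Z :|: T].
have PT : P T by rewrite /P IT subxx subsetUr.
have [W [/and3P [IW TW WZ] HW]] := max_exists PT.
have lt : (#|W| < #|D|)%N by rewrite cZ ltnS; apply: Hb.
have [e] := Hx W D IW ID lt; rewrite inE => /andP [eW eD] Ie.
case: (eqVneq e a) => [ea | nea].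
  subst e; apply: (negP nIaT); apply: (Hh (a |: W)) => //.
  by apply: setUS.
have : P (e |: W).
  rewrite /P Ie (subset_trans TW (subsetUr _ _)) /= subUset WZ andbT sub1set.
  by rewrite !inE nea eD.
move/HW; rewrite cardsU1 eW add1n ltnn //.
Qed.

Arguments exch_lemma {I D T a q}.
Lemma restr_trunc_matroid (I2 : pred {set E}) U q :
  is_matroid I2 -> is_matroid (restr_trunc I2 U q).
Proof.
case=> I0 Ih Ix; split.
- by rewrite /restr_trunc I0 sub0set cards0.
- move=> A B BA /and3P [IA AU Aq]; rewrite /restr_trunc (Ih A) //=.
  rewrite (subset_trans BA AU) /=; apply: leq_trans Aq; exact: subset_leq_card.
- move=> A B /and3P [IA AU Aq] /and3P [IB BU Bq] lt.
  have [e eBA Ie] := Ix A B IA IB lt; exists e => //.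
  move: eBA; rewrite inE => /andP [eA eB].
  rewrite /restr_trunc Ie subUset AU sub1set (subsetP BU e eB) /=.
  by rewrite cardsU1 eA add1n; apply: leq_trans Bq.
Qed.

Lemma min_basis_span (J : pred {set E}) (c : E -> R) (B : {set E}) (a : E) :
  is_matroid J -> (forall e, 0 <= c e) -> is_min_basis J c B -> a \notin B ->
  ~ J (a |: [set b in B | c b <= c a]).
Proof.
move=> Jm c0 [[JB Bmax] Bmin] aB JaT.
case: (Jm) => _ Jh Jx.
set T := [set b in B | c b <= c a].
pose P := fun W : {set E} => [&& J W, a |: T \subset W & W \subset a |: B].
have PT : P (a |: T).
  rewrite /P JaT subxx /=; apply: setUS; apply/subsetP => x; rewrite inE.
  by case/andP.
have [W [/and3P [JW TW WB] HW]] := max_exists PT.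
have aW : a \in W by apply: (subsetP TW); rewrite !inE eqxx.
have geB : (#|B| <= #|W|)%N.
  rewrite leqNgt; apply/negP => lt.
  have [e] := Jx W B JW JB lt; rewrite inE => /andP [eW eB] Je.
  have : P (e |: W).
    rewrite /P Je (subset_trans TW (subsetUr _ _)) /= subUset WB andbT sub1set.
    by rewrite !inE eB orbT.
  by move/HW; rewrite cardsU1 eW add1n ltnn.
have Wbasis : is_basis J W.
  split => // X JX WX; apply/eqP; rewrite eqEsubset; apply/andP; split => //.
  apply: contrapT => nXW.
  have pr : W \proper X by rewrite properEneq WX andbT; apply/negP => /eqP eW;
    apply: nXW; rewrite -eW subxx.
  have lt : (#|B| < #|X|)%N by apply: (leq_ltn_trans geB); apply: proper_card.
  have [e] := Jx B X JB JX lt; rewrite inE => /andP [eB eX] Je.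
  have := Bmax _ Je (subsetUr _ _) => eq.
  by move: eB; rewrite -eq !inE eqxx.
have le := Bmin W Wbasis.
have nBW : ~~ (B \subset W).
  apply/negP => BW.
  have := Bmax W JW BW => eq; by rewrite -eq aW in aB.
have [b' bB' bW'] : exists2 b', b' \in B & b' \notin W.
  move/subsetPn: nBW => [x xB xW]; by exists x.
have cb' : c a < c b'.
  rewrite ltNge; apply/negP => cle; move/negP: bW'; apply.
  by apply: (subsetP TW); rewrite !inE bB' cle orbT.
have eqW : W :\ a = B :&: W.
  apply/setP => x; rewrite !inE; case: (eqVneq x a) => [-> | nxa] /=.
    by rewrite (negbTE aB).
  case xW: (x \in W); rewrite ?andbF //= andbT.
  by move/subsetP: WB => /(_ x xW); rewrite !inE (negbTE nxa).
move: le; rewrite /wsum (big_setD1 a aW) /= eqW (big_setID W) /= => le.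
have : c b' <= \sum_(i in B :\: W) c i.
  have bBW : b' \in B :\: W by rewrite inE bB' bW'.
  rewrite (big_setD1 b' bBW) /= lerDl; apply: sumr_ge0 => i _; exact: c0.
move=> h.
have : \sum_(i in B :&: W) c i + \sum_(i in B :\: W) c i <=
       \sum_(i in B :&: W) c i + c a.
  by move: le; rewrite [c a + _]addrC.
rewrite lerD2l => h2.
have := le_trans h h2; by rewrite leNgt cb'.
Qed.

End Helpers.
Arguments noext_bound {E I Z T}.
Arguments exch_lemma {E I D T a q}.
Arguments restr_trunc_matroid {E I2}.
Arguments min_basis_span {E R J c B a}.
Arguments max_exists {E P S0}.

Theorem mainTheorem12 (E : finType) (R : realType)
  (I1 I2 : pred {set E}) (c p : E -> R) (beta eps alpha : R) (r : nat)
  (U Delta B : {set E}) (a : E) :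
  is_matroid I1 -> is_matroid I2 ->
  (forall e, 0 <= c e) -> (forall e, 0 <= p e) -> 0 <= beta ->
  0 < eps -> eps < 1 / 2 ->
  OPT I1 I2 c p beta / 2 <= alpha -> alpha <= OPT I1 I2 c p beta ->
  (1 <= r)%N -> r%:R <= ln (eps / 2) / ln (1 - eps) + 1 ->
  U \subset Kclass p eps alpha r ->
  Mle I1 I2 (q_eps eps) Delta ->
  is_min_basis (restr_trunc I2 U (q_eps eps)) c B ->
  a \in (U :&: Delta) :\: B ->
  exists2 b, b \in B :\: Delta &
    (is_shift I1 I2 c p eps alpha r Delta a b \/
     is_semi_shift I1 I2 c p eps alpha r Delta a b).
Proof.
move=> I1m I2m c0 _ _ _ _ _ _ _ _ UK MD Bmin.
rewrite !inE => /andP [aB /andP [aU aD]].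
set q := q_eps eps in MD Bmin *.
have Jm := restr_trunc_matroid U q I2m.
have JB : restr_trunc I2 U q B by case: Bmin => [[]].
set T := [set b in B | c b <= c a].
have TB : T \subset B by apply/subsetP => x; rewrite inE => /andP [].
have JT : restr_trunc I2 U q T by case: Jm => _ Jh _; apply: (Jh B).
have nJ := min_basis_span Jm c0 Bmin aB.
case/and3P: JB => _ BU _.
case/and3P: JT => I2T _ Tq.
have aT : a \notin T by apply/negP => /(subsetP TB); rewrite (negbTE aB).
case/and3P: (MD) => I1D I2D Dq.
have Hc : ((q <= #|T|)%N /\ (#|Delta| <= q)%N \/ ~~ I2 (a |: T)).
  case I2aT: (I2 (a |: T)); [left | by right].
  split => //; rewrite leqNgt; apply/negP => lt; apply: nJ.
  rewrite /restr_trunc I2aT subUset sub1set aU (subset_trans TB BU) /=.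
  by rewrite cardsU1 aT add1n.
have [b] := exch_lemma I2m I2D aD I2T aT Hc.
rewrite !inE => /andP [bD /andP [bB cba]] Ib.
have bK : b \in Kclass p eps alpha r :\: Delta.
  by rewrite inE bD (subsetP UK) // (subsetP BU).
have aK : a \in Delta :&: Kclass p eps alpha r.
  by rewrite inE aD (subsetP UK).
exists b; first by rewrite inE bD bB.
case I1b: (I1 (b |: (Delta :\ a))).
  left; split => //; apply/and3P; split => //.
  have hb : b \notin Delta :\ a by rewrite !inE (negbTE bD) andbF.
  rewrite cardsU1 hb add1n.
  move: Dq; rewrite (cardsD1 a Delta) aD add1n; exact: id.
by right; split => //; split => //; rewrite I1b.
Qed.
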